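(* Let $P_1,\ldots,P_d$ be real-valued random variables (test statistics, not necessarily $p$-values) associated with null hypotheses $H_1,\ldots,H_d$, and let $I_0\subseteq\{1,\ldots,d\}$ be the index set of true null hypotheses. Fix $\tilde\alpha\in(0,1)$ and consider the step-up procedure based on $P_1,\ldots,P_d$ with critical constants $\alpha_i=i\tilde\alpha/d$, $i=1,\ldots,d$. Fix $c\in(\tilde\alpha,1]$ and a subset $\mathcal S\subseteq I_0$, and assume: (1) for each $i\in I_0\setminus\mathcal S$, $P_i$ is PLTDN on $\boldsymbol P_{-i}$ over $(0,c)$; (2) for each $i\in\mathcal S$ there is a random variable $\hat P_i$ such that, conditionally on $\boldsymbol P_{-i}$, $\hat P_i$ is a nondecreasing function of $P_i$ and is stochastically smaller than $P_i$, i.e. almost surely $\Pr(P_i\le u\mid \boldsymbol P_{-i})\le \Pr(\hat P_i\le u\mid \boldsymbol P_{-i})$ for all $u\in(0,c)$; and $\hat P_i$ is PLTDN on $\boldsymbol P_{-i}$ over $(0,c)$. Then the false discovery rate of this step-up procedure satisfies $$\mathrm{FDR}\le \sum_{i\in I_0\setminus\mathcal S}\Pr\big(P_i\le \tilde\alpha/d\big)+\sum_{i\in \mathcal S}\Pr\big(\hat P_i\le \tilde\alpha/d\big).$$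
   Context: Step-up procedure with critical constants $\alpha_1\le\cdots\le\alpha_d$: order the statistics as $P_{(1)}\le\cdots\le P_{(d)}$, let $R=\max\{i: P_{(i)}\le\alpha_i\}$, and reject $H_i$ for all $i$ with $P_i\le P_{(R)}$ if $R$ exists; otherwise reject nothing. The false discovery rate is $\mathrm{FDR}=E[V/\max(R,1)]$, where $V$ is the number of rejected true nulls and $R$ the number of rejections. $\boldsymbol P_{-i}$ denotes the vector $(P_1,\ldots,P_d)$ with the $i$-th coordinate removed. PLTDN (positive left-tail dependence under the null): for $i\in I_0$ and $c\in(0,1]$, a random variable $Q$ is said to be PLTDN on $\boldsymbol P_{-i}$ over $(0,c)$ if either (a) $u\mapsto \Pr(Q\le u\mid\boldsymbol P_{-i})/u$ is (almost surely) nonincreasing on $(0,c)$; or (b) for every coordinatewise nondecreasing function $g$ of $\boldsymbol P_{-i}$ and every fixed constant $t$ (with $\Pr(g(\boldsymbol P_{-i})\le t)>0$), $u\mapsto\Pr(Q\le u\mid g(\boldsymbol P_{-i})\le t)/u$ is nonincreasing on $(0,c)$. *)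

(* Defs.v *)
From HB Require Import structures.
From mathcomp Require Import all_boot all_order all_algebra.
From mathcomp Require Import all_classical all_reals all_analysis.
Set Implicit Arguments. Unset Strict Implicit. Unset Printing Implicit Defensive.
Import Order.TTheory GRing.Theory Num.Theory.
Local Open Scope classical_set_scope.
Local Open Scope ring_scope.

Definition sigma_minus {d} {T : measurableType d} {R : realType} {n : nat}
  (X : 'I_n -> T -> R) (i : 'I_n) : set (set T) :=
  <<s [set A | exists2 j : 'I_n, j != i &
               exists2 B : set R, measurable B & A = X j @^-1` B] >>.

Definition cond_prob_version {d} {T : measurableType d} {R : realType}
  (P : probability T R) (G : set (set T)) (E : set T) (f : T -> R) : Prop :=
  [/\ (forall B : set R, measurable B -> G (f @^-1` B)),
      P.-integrable setT (EFin \o f) &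
      (forall A, G A -> (\int[P]_(x in A) (f x)%:E = P (E `&` A))%E)].

(* the vector P_{-i}, represented as an element of R^n whose i-th
   coordinate is set to 0 *)
Definition minus_vec {T} {R : realType} {n : nat} (X : 'I_n -> T -> R)
  (i : 'I_n) (x : T) : 'I_n -> R := fun j => if j == i then 0 else X j x.

Definition PLTDN_a {d} {T : measurableType d} {R : realType} {n : nat}
  (P : probability T R) (X : 'I_n -> T -> R) (i : 'I_n) (Q : T -> R) (c : R)
  : Prop :=
  exists k : R -> T -> R,
    (forall u, 0 < u < c ->
       cond_prob_version P (sigma_minus X i) [set x | Q x <= u] (k u)) /\
    {ae P, forall x, forall u v, 0 < u -> u <= v -> v < c ->
                     k v x / v <= k u x / u}.

Definition PLTDN_b {d} {T : measurableType d} {R : realType} {n : nat}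
  (P : probability T R) (X : 'I_n -> T -> R) (i : 'I_n) (Q : T -> R) (c : R)
  : Prop :=
  forall (g : ('I_n -> R) -> R) (t : R),
    (forall v w : 'I_n -> R, (forall j, v j <= w j) -> g v <= g w) ->
    let E := [set x | g (minus_vec X i x) <= t] in
    measurable E -> (0 < P E)%E ->
    forall u v, 0 < u -> u <= v -> v < c ->
      fine (P ([set x | Q x <= v] `&` E)) / fine (P E) / v <=
      fine (P ([set x | Q x <= u] `&` E)) / fine (P E) / u.

Definition PLTDN {d} {T : measurableType d} {R : realType} {n : nat}
  (P : probability T R) (X : 'I_n -> T -> R) (i : 'I_n) (Q : T -> R) (c : R)
  : Prop := PLTDN_a P X i Q c \/ PLTDN_b P X i Q c.

(* order statistics P_(1) <= ... <= P_(n) (0-indexed list) *)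
Definition order_stats {T} {R : realType} {n : nat} (X : 'I_n -> T -> R)
  (x : T) : seq R := sort <=%R [seq X j x | j <- enum 'I_n].

(* R = max{ k in 1..n : P_(k) <= alpha_k }, 0 if no such k *)
Definition stepup_index {T} {R : realType} {n : nat} (alpha : nat -> R)
  (X : 'I_n -> T -> R) (x : T) : nat :=
  \max_(k < n.+1 | (0 < (k : nat))%N &&
                   (nth 0 (order_stats X x) (k : nat).-1 <= alpha k)) (k : nat).

Definition stepup_rejected {T} {R : realType} {n : nat} (alpha : nat -> R)
  (X : 'I_n -> T -> R) (x : T) : {set 'I_n} :=
  if (0 < stepup_index alpha X x)%N then
    [set j | X j x <= nth 0 (order_stats X x) (stepup_index alpha X x).-1]%SET
  else finset.set0.

Definition FDP {T} {R : realType} {n : nat} (I0 : {set 'I_n})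
  (alpha : nat -> R) (X : 'I_n -> T -> R) (x : T) : R :=
  (#|stepup_rejected alpha X x :&: I0|)%:R /
  (maxn #|stepup_rejected alpha X x| 1)%:R.

Definition FDR {d} {T : measurableType d} {R : realType} {n : nat}
  (P : probability T R) (I0 : {set 'I_n}) (alpha : nat -> R)
  (X : 'I_n -> T -> R) : \bar R :=
  (\int[P]_x (FDP I0 alpha X x)%:E)%E.

(* Main.v *)
Require Import Defs.
From HB Require Import structures.
From mathcomp Require Import all_boot all_order all_algebra.
From mathcomp Require Import all_classical all_reals all_analysis.
From mathcomp Require Import measurable_realfun.
From mathcomp Require Import ring lra.
Import Order.TTheory GRing.Theory Num.Theory.
Local Open Scope classical_set_scope.
Local Open Scope ring_scope.

Lemma count_enum_card (n : nat) (p : pred 'I_n) :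
  count p (enum 'I_n) = #|[set j | p j]%SET|%N.
Proof.
rewrite cardE -size_filter /enum_mem; congr size.
rewrite -filter_predI; apply: eq_filter => x /=; rewrite [RHS]inE; case: (p x) => //. 
Qed.

Lemma sorted_count (R : realType) (t : seq R) k a : sorted <=%R t -> (k < size t)%N ->
  (nth 0 t k <= a) = (k < count (fun v : R => (v <= a)%R) t)%N.
Proof.
move=> st kt.
have mono : forall i j, (i <= j)%N -> (j < size t)%N -> nth 0 t i <= nth 0 t j.
  move=> i j ij jt; apply: (sorted_leq_nth le_trans lexx 0 st) => //.
  by rewrite inE (leq_ltn_trans ij jt).
have -> : count (fun v : R => (v <= a)%R) t = (count (fun v : R => (v <= a)%R) (take k.+1 t) + count (fun v : R => (v <= a)%R) (drop k.+1 t))%N.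
  by rewrite -{1}(cat_take_drop k.+1 t) count_cat.
case: (leP (nth 0 t k) a) => h.
- have -> : count (fun v : R => (v <= a)%R) (take k.+1 t) = k.+1.
    have : all (fun v : R => (v <= a)%R) (take k.+1 t).
      apply/(all_nthP 0)=> j; rewrite (size_takel kt) => jk.
      by rewrite nth_take // (le_trans _ h) // mono.
    by rewrite all_count (size_takel kt) => /eqP.
  by rewrite ltnS leq_addr.
- apply/esym/negbTE; rewrite -leqNgt.
  have -> : count (fun v : R => (v <= a)%R) (drop k.+1 t) = 0%N.
    apply/eqP; rewrite -leqn0 leqNgt -has_count; apply/negP => /(has_nthP 0)[j].
    rewrite size_drop nth_drop => jt.
    rewrite leNgt => /negP; apply; apply: (lt_le_trans h); apply: mono.
      by rewrite addSn ltnW // ltnS leq_addr.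
    by rewrite -ltn_subRL.
  rewrite addn0 (take_nth 0 kt) -cats1 count_cat /= leNgt h /= !addn0.
  by apply: (leq_trans (count_size _ _)); rewrite size_take; case: ifP => // /negbT; rewrite -leqNgt.
Qed.

Lemma bigmax_char (m : nat) (Q : pred 'I_m) :
  (\max_(k | Q k) (k : nat) = 0)%N \/
  exists2 k : 'I_m, Q k & (\max_(k | Q k) (k : nat))%N = k.
Proof.
apply: (big_ind (fun r => r = 0%N \/ exists2 k : 'I_m, Q k & r = k)).
- by left.
- move=> a b [->|[ka Qa ->]] [->|[kb Qb ->]].
  + by left.
  + by right; exists kb => //; rewrite max0n.
  + by right; exists ka => //; rewrite maxn0.
  + by right; case: (leqP ka kb) => h; [exists kb; rewrite // (maxn_idPr h)|
       exists ka; rewrite // (maxn_idPl (ltnW h))].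
- by move=> k Qk; right; exists k.
Qed.

Section Comb.
Variables (R : realType) (n : nat) (alpha : nat -> R).
Hypothesis amono : forall a b, (a <= b)%N -> alpha a <= alpha b.

Definition cntv (w : 'I_n -> R) (a : R) := #|[set j | w j <= a]%SET|.
Definition cnti (i : 'I_n) (w : 'I_n -> R) (a : R) :=
  #|[set j | (j != i) && (w j <= a)]%SET|.
Definition Rw (i : 'I_n) (w : 'I_n -> R) :=
  (\max_(k < n.+1 | (0 < k)%N && (k <= (cnti i w (alpha k)).+1)%N) (k : nat))%N.

Lemma cntv_mono w a b : a <= b -> (cntv w a <= cntv w b)%N.
Proof.
move=> ab; apply: subset_leq_card; apply/fintype.subsetP => j; rewrite !inE => h.
exact: le_trans ab.
Qed.

Lemma cnti_mono i w a b : a <= b -> (cnti i w a <= cnti i w b)%N.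
Proof.
move=> ab; apply: subset_leq_card; apply/fintype.subsetP => j; rewrite !inE => /andP[-> h].
exact: le_trans ab.
Qed.

Lemma cntv_le w a : (cntv w a <= n)%N.
Proof. by rewrite /cntv -[X in (_ <= X)%N]card_ord max_card. Qed.

Lemma cntv_cnti w i a : cntv w a = ((w i <= a)%R + cnti i w a)%N.
Proof.
rewrite /cntv (cardD1 i) inE; congr (_ + _)%N; apply: eq_card => j.
by rewrite !inE.
Qed.

Lemma Rw_le i w : (Rw i w <= n)%N.
Proof. by apply/bigmax_leqP => k _; rewrite -ltnS. Qed.

Lemma Rw_mono i v w : (forall j, v j <= w j) -> (Rw i w <= Rw i v)%N.
Proof.
move=> vw; apply/bigmax_leqP => k /andP[k0 kc]; apply: leq_bigmax_cond.
rewrite k0 /=; apply: (leq_trans kc); rewrite ltnS; apply: subset_leq_card.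
apply/fintype.subsetP => j; rewrite !inE => /andP[-> h] /=; exact: le_trans (vw j) h.
Qed.

Variables (T : Type) (X : 'I_n -> T -> R) (x : T).

Let v j := X j x.
Let Q (k : 'I_n.+1) := (0 < k)%N && (k <= cntv v (alpha k))%N.

Lemma stepup_indexE : stepup_index alpha X x = (\max_(k | Q k) (k : nat))%N.
Proof.
apply: eq_bigl => k; rewrite /Q; case: (posnP k) => [->//|k0] /=.
have ks : (k.-1 < size (order_stats X x))%N.
  by rewrite size_sort size_map size_enum_ord prednK // -ltnS.
rewrite sorted_count //; last exact: (sort_sorted le_total).
rewrite prednK // /order_stats.
rewrite (permP (permEl (perm_sort <=%R [seq X j x | j <- enum 'I_n]))) /=.
by rewrite count_map count_enum_card.
Qed.

Let r := stepup_index alpha X x.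
Let p := nth 0 (order_stats X x) r.-1.

Lemma r_le : (r <= n)%N.
Proof. by rewrite /r stepup_indexE; apply/bigmax_leqP => k _; rewrite -ltnS. Qed.

Lemma r_char : r = 0%N \/ (0 < r)%N /\ (r <= cntv v (alpha r))%N.
Proof.
rewrite /r stepup_indexE; case: (bigmax_char _ Q) => [->|[k /andP[k0 kc] ->]]; auto.
Qed.

Lemma Q_le (k : nat) : (0 < k)%N -> (k <= n)%N -> (k <= cntv v (alpha k))%N -> (k <= r)%N.
Proof.
move=> k0 kn kc; rewrite /r stepup_indexE.
have kn' : (k < n.+1)%N by [].
by apply: (leq_bigmax_cond (Ordinal kn')); rewrite /Q /= k0.
Qed.

Lemma p_prop : (0 < r)%N -> p <= alpha r /\ (r <= cntv v p)%N.
Proof.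
move=> r0; have ks : (r.-1 < size (order_stats X x))%N.
  by rewrite size_sort size_map size_enum_ord prednK // r_le.
have cE a : (r.-1 < count (fun w : R => (w <= a)%R) (order_stats X x))%N =
            (r <= cntv v a)%N.
  rewrite prednK //; rewrite (permP (permEl (perm_sort <=%R [seq X j x | j <- enum 'I_n]))) /=.
  by rewrite count_map count_enum_card.
have so := sort_sorted (@le_total _ R) [seq X j x | j <- enum 'I_n].
split.
- rewrite /p (sorted_count _ _ _ _ so ks) cE.
  by case: r_char => [r00|[_ //]]; rewrite r00 in r0.
- by rewrite -cE -(sorted_count _ _ _ _ so ks).
Qed.

Lemma card_rej : (0 < r)%N -> #|stepup_rejected alpha X x| = r.
Proof.
move=> r0; rewrite /stepup_rejected -/r r0 -/p.
have [pa rc] := p_prop r0.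
have -> : #|[set j | X j x <= p]%SET| = cntv v p by [].
apply/eqP; rewrite eqn_leq rc andbT leqNgt; apply/negP => h.
have := r_le; rewrite leq_eqVlt => /orP[/eqP rn|rn].
- by have := cntv_le v p; rewrite leqNgt -rn h.
- have : (r.+1 <= r)%N; last by rewrite ltnn.
  apply: Q_le => //; apply: (leq_trans h); apply: cntv_mono.
  exact: le_trans pa (amono _ _ (leqnSn r)).
Qed.

Let ri (i : 'I_n) := Rw i (minus_vec X i x).
Let ci i a := cnti i (minus_vec X i x) a.

Lemma ci_eq i a : ci i a = #|[set j | (j != i) && (v j <= a)]%SET|.
Proof.
by apply: eq_card => j; rewrite !inE /minus_vec; case: eqP.
Qed.

Lemma cntv_ci i a : cntv v a = ((v i <= a)%R + ci i a)%N.
Proof. by rewrite ci_eq (cntv_cnti v i). Qed.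

Lemma ri_char i : ri i = 0%N \/ (0 < ri i)%N /\ (ri i <= (ci i (alpha (ri i))).+1)%N.
Proof.
rewrite /ri /Rw; case: (bigmax_char _ (fun k : 'I_n.+1 =>
  (0 < k)%N && (k <= (cnti i (minus_vec X i x) (alpha k)).+1)%N)) =>
  [->|[k /andP[k0 kc] ->]]; auto.
Qed.

Lemma Qi_le i (k : nat) : (0 < k)%N -> (k <= n)%N -> (k <= (ci i (alpha k)).+1)%N ->
  (k <= ri i)%N.
Proof.
move=> k0 kn kc; have kn' : (k < n.+1)%N by [].
by apply: (leq_bigmax_cond (Ordinal kn')); rewrite /= k0.
Qed.

Lemma K1 i : i \in stepup_rejected alpha X x ->
  [/\ (0 < r)%N, v i <= alpha r & ri i = r].
Proof.
rewrite /stepup_rejected -/r; case: (posnP r) => [->|r0]; first by rewrite inE.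
rewrite -/p inE => hi; have [pa rc] := p_prop r0.
have via : v i <= alpha r by exact: le_trans hi pa.
have [rca|] := r_char; first by rewrite rca in r0.
move=> [_ rca]; split => //; apply/eqP; rewrite eqn_leq; apply/andP; split.
- case: (ri_char i) => [->//|[ri0 ric]].
  have rr : (r <= ri i)%N.
    by apply: Qi_le => //; [exact: r_le|]; move: rca; rewrite (cntv_ci i) via.
  apply: Q_le => //; first exact: Rw_le.
  rewrite (cntv_ci i) (le_trans via (amono _ _ rr)) //.
- by apply: Qi_le => //; [exact: r_le|]; move: rca; rewrite (cntv_ci i) via.
Qed.

Lemma K2 i (k : nat) : (0 < k)%N -> v i <= alpha k -> ri i = k ->
  i \in stepup_rejected alpha X x.
Proof.
move=> k0 vik rik.
have kn : (k <= n)%N by rewrite -rik; exact: Rw_le.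
have Qk : (k <= cntv v (alpha k))%N.
  case: (ri_char i) => [|[_]]; first by rewrite rik => k00; rewrite k00 in k0.
  by rewrite rik (cntv_ci i) vik.
have kr : (k <= r)%N by exact: Q_le.
have r0 : (0 < r)%N by exact: leq_trans kr.
have rk : r = k.
  apply/eqP; rewrite eqn_leq kr andbT.
  have [rca|[_ rca]] := r_char; first by rewrite rca in r0.
  rewrite -rik; apply: Qi_le => //; first exact: r_le.
  by move: rca; rewrite (cntv_ci i) (le_trans vik (amono _ _ kr)).
rewrite /stepup_rejected -/r r0 -/p inE.
have [pa rc] := p_prop r0.
rewrite leNgt; apply/negP => pv.
have h1 : (k <= ci i p)%N.
  by move: rc; rewrite (cntv_ci i) rk (lt_geF pv).
have h2 : (k.+1 <= cntv v (alpha k))%N.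
  rewrite (cntv_ci i) vik add1n ltnS; apply: (leq_trans h1); apply: cnti_mono.
  by rewrite -rk.
move: kn; rewrite leq_eqVlt => /orP[/eqP kn|kn].
- by have := cntv_le v (alpha k); rewrite leqNgt -kn h2.
- have : (k.+1 <= r)%N; last by rewrite rk ltnn.
  apply: Q_le => //; apply: (leq_trans h2); apply: cntv_mono.
  exact: amono.
Qed.

Lemma FDP_decomp (I0 : {set 'I_n}) : FDP I0 alpha X x =
  \sum_(i in I0) \sum_(k < n) (if (X i x <= alpha k.+1) &&
       (Rw i (minus_vec X i x) == k.+1)%N then (k.+1)%:R^-1 else 0).
Proof.
rewrite /FDP.
have -> : (#|stepup_rejected alpha X x :&: I0|)%:R =
   \sum_(i in I0) ((i \in stepup_rejected alpha X x)%:R : R).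
  rewrite -sum1_card natr_sum big_mkcond [RHS]big_mkcond /=; apply: eq_bigr => j _.
  by rewrite inE; case: (j \in stepup_rejected alpha X x); case: (j \in I0).
rewrite mulr_suml; apply: eq_bigr => i _.
case: (boolP (i \in stepup_rejected alpha X x)) => hi.
- have [r0 via rir] := K1 i hi.
  rewrite (card_rej r0) (maxn_idPl r0) mul1r.
  have rn1 : (r.-1 < n)%N by rewrite prednK // r_le.
  rewrite (bigD1 (Ordinal rn1)) //= prednK // via /=.
  have -> : (Rw i (minus_vec X i x) == r)%N by apply/eqP.
  rewrite big1 ?addr0 // => j /eqP jne; case: ifP => // /andP[_ /eqP rj].
  by exfalso; apply: jne; apply: val_inj => /=; move: rir; rewrite /ri rj => <-.
- rewrite mul0r big1 // => j _; case: ifP => // /andP[h1 /eqP h2].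
  by have := K2 i j.+1 (ltn0Sn j) h1 h2; rewrite (negbTE hi).
Qed.

End Comb.

Lemma telescope_le (R : realType) (n : nat) (a : nat -> R) (p : nat -> nat -> R) :
  (forall k, (0 < k <= n)%N -> a k <= p k k - p k k.+1) ->
  p n n.+1 = 0 ->
  (forall m, (0 < m < n)%N -> p m.+1 m.+1 / m.+1%:R <= p m m.+1 / m%:R) ->
  0 <= p 1%N 1%N ->
  \sum_(k < n) a k.+1 / k.+1%:R <= p 1%N 1%N.
Proof.
move=> ha hn hk h0.
case: n ha hn hk => [|n] ha hn hk; first by rewrite big_ord0.
suff H : forall N, (0 < N <= n.+1)%N ->
    \sum_(k < N) a k.+1 / k.+1%:R <= p 1%N 1%N - p N N.+1 / N%:R.
  by have := H n.+1 (leqnn _); rewrite /= hn mul0r subr0.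
elim=> [//|N IH] /andP[_ NN].
case: N IH NN => [|N] IH NN.
  rewrite big_ord1 /= !divr1; exact: ha.
rewrite big_ord_recr /=.
have H1 := IH (ltnW NN).
have H2 : a N.+2 / N.+2%:R <= p N.+2 N.+2 / N.+2%:R - p N.+2 N.+3 / N.+2%:R.
  by rewrite -mulrBl ler_wpM2r // ?invr_ge0 // ha.
have H3 := hk N.+1 NN.
move: H1 H2 H3; set s := \sum_(_ < _) _; set A := a _ / _; set B := p N.+2 N.+2 / _; set C := p N.+2 N.+3 / _; set D := p N.+1 N.+2 / _; set E := p 1%N 1%N; lra.
Qed.

Section SA.
Variables (T : Type) (Sig : set (set T)).
Hypothesis saS : sigma_algebra setT Sig.

Lemma sa0 : Sig set0. Proof. by case: saS. Qed.
Lemma saC A : Sig A -> Sig (~` A).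
Proof. by move=> h; rewrite -setTD; case: saS => _ hC _; exact: hC. Qed.
Lemma saU A B : Sig A -> Sig B -> Sig (A `|` B).
Proof.
move=> hA hB; rewrite -bigcup2E; case: saS => _ _ hU; apply: hU => -[|[|k]] //=.
exact: sa0.
Qed.
Lemma saT : Sig setT. Proof. by rewrite -setC0; apply: saC; exact: sa0. Qed.
Lemma saI A B : Sig A -> Sig B -> Sig (A `&` B).
Proof.
by move=> hA hB; rewrite -[A]setCK -[B]setCK -setCU; apply: saC; apply: saU; apply: saC.
Qed.

Lemma sa_bigU (I : Type) (r : seq I) (p : pred I) (F : I -> set T) :
  (forall i, p i -> Sig (F i)) -> Sig (\big[setU/set0]_(i <- r | p i) F i).
Proof. by move=> h; apply: big_ind => //; [exact: sa0|exact: saU]. Qed.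

Lemma sa_bigI (I : Type) (r : seq I) (p : pred I) (F : I -> set T) :
  (forall i, p i -> Sig (F i)) -> Sig (\big[setI/setT]_(i <- r | p i) F i).
Proof. by move=> h; apply: big_ind => //; [exact: saT|exact: saI]. Qed.

End SA.

Lemma in_bigU {T I : Type} (r : seq I) (p : pred I) (F : I -> set T) x :
  (\big[setU/set0]_(i <- r | p i) F i) x -> exists2 i, p i & F i x.
Proof.
elim: r => [|a r IH]; rewrite ?big_nil ?big_cons //.
case: ifP => pa; last exact: IH.
by move=> [h|h]; [exists a | exact: IH h].
Qed.

Lemma bigU_in {T : Type} {I : eqType} (r : seq I) (p : pred I) (F : I -> set T) x i :
  i \in r -> p i -> F i x -> (\big[setU/set0]_(i <- r | p i) F i) x.
Proof.
elim: r => [//|a r IH]; rewrite in_cons big_cons => /orP[/eqP<-|ir] pi Fx.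
  by rewrite pi; left.
by case: ifP => _; [right|]; exact: IH.
Qed.

Lemma in_bigI {T : Type} {I : eqType} (r : seq I) (p : pred I) (F : I -> set T) x :
  (\big[setI/setT]_(i <- r | p i) F i) x -> forall i, i \in r -> p i -> F i x.
Proof.
elim: r => [//|a r IH]; rewrite big_cons => h i; rewrite in_cons => /orP[/eqP->|ir] pi.
  by move: h; rewrite pi => -[].
by apply: IH => //; move: h; case: ifP => // _ [].
Qed.

Lemma bigI_in {T I : Type} (r : seq I) (p : pred I) (F : I -> set T) x :
  (forall i, p i -> F i x) -> (\big[setI/setT]_(i <- r | p i) F i) x.
Proof. by move=> h; apply: (big_ind (fun A : set T => A x)) => // A B; split. Qed.

Lemma sa_bool {T : Type} (Sig : set (set T)) (J : finType) (b : J -> T -> bool)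
  (phi : {set J} -> bool) : sigma_algebra setT Sig ->
  (forall j, Sig [set x | b j x]) -> Sig [set x | phi [set j | b j x]%SET].
Proof.
move=> saS hb.
have -> : [set x | phi [set j | b j x]%SET] =
   \big[setU/set0]_(S <- enum {set J} | phi S)
     \big[setI/setT]_(j <- enum J)
        (if j \in S then [set x | b j x] else ~` [set x | b j x]).
  apply/seteqP; split => x /=.
  - move=> h.
    have hI : (\big[setI/setT]_(j <- enum J)
        (if j \in [set j | b j x]%SET then [set x | b j x] else ~` [set x | b j x])) x.
      apply: bigI_in => j _; rewrite inE; case: (boolP (b j x)) => hj /=; [exact: hj | exact/negP].
    by apply: (bigU_in _ _ _ x [set j | b j x]%SET _ h hI); rewrite mem_enum.
  - move=> hx; have [S pS hS] := in_bigU _ _ _ _ hx.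
    suff -> : [set j | b j x]%SET = S by [].
    apply/setP => j; rewrite inE.
    have jin : j \in enum J by rewrite mem_enum.
    have := in_bigI _ _ _ _ hS j jin isT.
    by case: (j \in S) => /= h; [exact/idP | apply/negP].
apply: sa_bigU => // S _; apply: sa_bigI => // j _; case: ifP => _ //.
exact: saC.
Qed.

Section Meas.
Variables (d : measure_display) (T : measurableType d) (R : realType)
  (P : probability T R) (n : nat) (X : 'I_n -> T -> R) (alpha : nat -> R).
Hypothesis mX : forall j, measurable_fun setT (X j).

Lemma meas_le (f : T -> R) a : measurable_fun setT f -> measurable [set x | f x <= a].
Proof.
move=> mf; have := mf measurableT _ (measurable_itv `]-oo, a]); rewrite setTI.
congr measurable; apply/seteqP; split => x /=; rewrite in_itv /=; done.
Qed.

Lemma sm_sa i : sigma_algebra setT (sigma_minus X i).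
Proof. exact: smallest_sigma_algebra. Qed.

Lemma sm_meas i A : sigma_minus X i A -> measurable A.
Proof.
move=> h; apply: (smallest_sub (@sigma_algebra_measurable _ T) _ h).
move=> B [j _ [C mC ->]]; rewrite -[X j @^-1` C]setTI; exact: mX.
Qed.

Lemma sm_gen i j a : j != i -> sigma_minus X i [set x | X j x <= a].
Proof.
move=> ji; apply: sub_sigma_algebra; exists j => //.
exists `]-oo, a]%classic; first exact: measurable_itv.
by apply/seteqP; split => x /=; rewrite in_itv.
Qed.

Definition Ri i x := Rw _ n alpha i (minus_vec X i x).

Lemma Ri_sm i (phi : nat -> bool) : sigma_minus X i [set x | phi (Ri i x)].
Proof.
pose b (jm : 'I_n * 'I_n.+1) x := (jm.1 != i) && (X jm.1 x <= alpha jm.2).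
pose Phi (S : {set 'I_n * 'I_n.+1}) := phi
  (\max_(k < n.+1 | (0 < k)%N && (k <= #|[set j | (j, k) \in S]%SET|.+1)%N) (k : nat))%N.
have -> : [set x | phi (Ri i x)] = [set x | Phi [set jm | b jm x]%SET].
  apply/seteqP; split => x /=; rewrite /Phi /Ri /Rw;
  (have -> : (\max_(k < n.+1 | (0 < k)%N && (k <= (cnti _ _ i (minus_vec X i x) (alpha k)).+1)%N) (k : nat))%N =
     (\max_(k < n.+1 | (0 < k)%N && (k <= #|[set j | (j, k) \in [set jm | b jm x]%SET]%SET|.+1)%N) (k : nat))%N by
    apply: eq_bigl => k; congr (_ && (_ <= _.+1)%N); apply: eq_card => j;
    rewrite !inE /b /minus_vec /=; case: eqP); done.
apply: sa_bool; first exact: sm_sa.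
move=> [j m]; rewrite /b /=; case: (eqVneq j i) => [->|ji].
- suff -> : [set x | ~~ true && (X i x <= alpha m)] = set0 by exact: sa0 _ _ (sm_sa i).
  by apply/seteqP; split.
- exact: sm_gen.
Qed.

Lemma ae_le_int (B : set T) (f g : T -> R) : measurable B ->
  P.-integrable setT (EFin \o f) -> P.-integrable setT (EFin \o g) ->
  {ae P, forall x, f x <= g x} ->
  (\int[P]_(x in B) (f x)%:E <= \int[P]_(x in B) (g x)%:E)%E.
Proof.
move=> mB intf intg [N [mN PN sub]].
have intfB := integrableS measurableT mB (@subsetT _ B) intf.
have intgB := integrableS measurableT mB (@subsetT _ B) intg.
rewrite (negligible_integral mN mB intfB PN) (negligible_integral mN mB intgB PN).
apply: le_integral.
- exact: measurableD.
- exact: (integrableS mB (measurableD mB mN) (fun x (h : (B `\` N) x) => h.1) intfB).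
- exact: (integrableS mB (measurableD mB mN) (fun x (h : (B `\` N) x) => h.1) intgB).
- move=> x; rewrite inE => -[Bx Nx]; rewrite lee_fin.
  case: (boolP (f x <= g x)) => // /negP h; exfalso; apply: Nx; exact: sub.
Qed.

Lemma prE A : measurable A -> P A = (fine (P A))%:E.
Proof. by move=> mA; rewrite fineK // fin_num_measure. Qed.

Lemma pltdn_ratio i (Q : T -> R) (c : R) k u v : measurable_fun setT Q ->
  PLTDN P X i Q c -> 0 < u -> u <= v -> v < c ->
  fine (P ([set x | Q x <= v] `&` [set x | (k <= Ri i x)%N])) / v <=
  fine (P ([set x | Q x <= u] `&` [set x | (k <= Ri i x)%N])) / u.
Proof.
move=> mQ hP u0 uv vc.
set B := [set x | (k <= Ri i x)%N].
have BG : sigma_minus X i B := Ri_sm i (fun m => (k <= m)%N).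
have mB := sm_meas _ _ BG.
have v0 : 0 < v := lt_le_trans u0 uv.
have mEv := measurableI _ _ (meas_le _ v mQ) mB.
have mEu := measurableI _ _ (meas_le _ u mQ) mB.
case: hP => [[kf [hk hae]]|hb].
- have [_ intv hAv] := hk v (andb_true_intro (conj v0 vc)).
  have [_ intu hAu] := hk u (andb_true_intro (conj u0 (le_lt_trans uv vc))).
  have Ev := hAv B BG; have Eu := hAu B BG.
  have intuB := integrableS measurableT mB (@subsetT _ B) intu.
  have le1 : (\int[P]_(x in B) (kf v x)%:E <=
              \int[P]_(x in B) ((v / u) * kf u x)%:E)%E.
    apply: ae_le_int => //.
    - have -> : (EFin \o (fun x => v / u * kf u x)) =
                (fun x => ((v/u)%:E * (EFin \o kf u) x)%E).
        by apply/funext => x; rewrite /= EFinM.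
      exact: integrableZl.
    - apply: filterS hae => x h; have := h u v u0 uv vc.
      rewrite ler_pdivrMr // => h'; apply: (le_trans h').
      by rewrite le_eqVlt; apply/orP; left; apply/eqP; ring.
  move: le1; rewrite [X in (_ <= X)%E](eq_integral (fun x => ((v/u)%:E * (kf u x)%:E)%E)); last first.
    by move=> x _; rewrite EFinM.
  rewrite integralZl // Ev Eu (prE _ mEv) (prE _ mEu) -EFinM lee_fin => h.
  rewrite ler_pdivrMr //; apply: (le_trans h).
  by rewrite le_eqVlt; apply/orP; left; apply/eqP; ring.
- pose g := fun w : 'I_n -> R => - ((Rw _ n alpha i w)%:R : R).
  have hg : forall v w : 'I_n -> R, (forall j, v j <= w j) -> g v <= g w.
    by move=> v' w' vw; rewrite /g lerN2 ler_nat; exact: Rw_mono.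
  have := hb g (- (k%:R)) hg.
  have -> : [set x | g (minus_vec X i x) <= - k%:R] = B.
    by apply/seteqP; split => x /=; rewrite /g lerN2 ler_nat.
  move=> /(_ mB) hb'.
  have PB0 := measure_ge0 P B.
  case: (ltP 0%E (P B)) => PBpos.
  + have := hb' PBpos u v u0 uv vc.
    have pB : 0 < fine (P B).
      by rewrite fine_gt0 // PBpos /= (le_lt_trans (probability_le1 P mB)) // ltry.
    by rewrite !(mulrAC _ (fine (P B))^-1) ler_pM2r // invr_gt0.
  + have PB : P B = 0%E by apply/eqP; rewrite eq_le PBpos PB0.
    have z A : measurable A -> P (A `&` B) = 0%E.
      move=> mA; apply/eqP; rewrite eq_le measure_ge0 andbT -PB.
      exact: measureIr.
    by rewrite (z _ (meas_le _ v mQ)) (z _ (meas_le _ u mQ)) /= !mul0r.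
Qed.

Lemma S_le i (F G : R -> T -> R) (Ph : T -> R) u A :
  cond_prob_version P (sigma_minus X i) [set x | X i x <= u] (F u) ->
  cond_prob_version P (sigma_minus X i) [set x | Ph x <= u] (G u) ->
  {ae P, forall x, F u x <= G u x} -> sigma_minus X i A ->
  measurable_fun setT Ph ->
  fine (P ([set x | X i x <= u] `&` A)) <= fine (P ([set x | Ph x <= u] `&` A)).
Proof.
move=> [_ iF hF] [_ iG hG] ae hA mPh.
have mA := sm_meas _ _ hA.
rewrite -lee_fin -(prE _ (measurableI _ _ (meas_le _ u (mX i)) mA)).
rewrite -(prE _ (measurableI _ _ (meas_le _ u mPh) mA)) -hF // -hG //.
exact: ae_le_int.
Qed.

Lemma per_i i (Q : T -> R) (c a : R) :
  measurable_fun setT Q -> PLTDN P X i Q c ->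
  0 < a -> (forall k, alpha k = k%:R * a) -> n%:R * a < c ->
  (forall k, (0 < k <= n)%N ->
     fine (P ([set x | X i x <= alpha k] `&` [set x | Ri i x == k])) <=
     fine (P ([set x | Q x <= alpha k] `&` [set x | Ri i x == k]))) ->
  \sum_(k < n) fine (P ([set x | X i x <= alpha k.+1] `&` [set x | Ri i x == k.+1]))
       / k.+1%:R <= fine (P [set x | Q x <= alpha 1]).
Proof.
move=> mQ hP a0 hal nac hQ.
pose p u k := fine (P ([set x | Q x <= alpha u] `&` [set x | (k <= Ri i x)%N])).
have mB k : measurable [set x | (k <= Ri i x)%N].
  exact: sm_meas _ _ (Ri_sm i (fun m => (k <= m)%N)).
have mA k : measurable [set x | Ri i x == k].
  exact: sm_meas _ _ (Ri_sm i (fun m => m == k)).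
have mE u : measurable [set x | Q x <= alpha u] := meas_le _ _ mQ.
apply: (le_trans (telescope_le R n (fun k => fine (P ([set x | X i x <= alpha k] `&`
   [set x | Ri i x == k]))) p _ _ _ _)).
- move=> k kn; apply: (le_trans (hQ k kn)).
  have E : [set x | Q x <= alpha k] `&` [set x | (k <= Ri i x)%N] =
      ([set x | Q x <= alpha k] `&` [set x | Ri i x == k]) `|`
      ([set x | Q x <= alpha k] `&` [set x | (k.+1 <= Ri i x)%N]).
    rewrite -setIUr; congr (_ `&` _); apply/seteqP; split => x /=.
      by rewrite leq_eqVlt => /orP[/eqP<-|->]; [left|right].
    by move=> [/eqP->//|/ltnW].
  have D : ([set x | Q x <= alpha k] `&` [set x | Ri i x == k]) `&`
      ([set x | Q x <= alpha k] `&` [set x | (k.+1 <= Ri i x)%N]) = set0.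
    by apply/seteqP; split => x //= -[[_ /eqP h] [_]]; rewrite h ltnn.
  rewrite /p E measureU //; [|exact: measurableI|exact: measurableI].
  rewrite fineD ?fin_num_measure //; [|exact: measurableI|exact: measurableI].
  by rewrite addrK.
- rewrite /p; have -> : [set x | (n.+1 <= Ri i x)%N] = set0.
    by apply/seteqP; split => x //=; rewrite ltnNge Rw_le.
  by rewrite setI0 measure0.
- move=> m /andP[m0 mn].
  have h := pltdn_ratio i Q c m.+1 (alpha m) (alpha m.+1) mQ hP.
  have am0 : 0 < alpha m by rewrite hal mulr_gt0 // ltr0n.
  have amm : alpha m <= alpha m.+1 by rewrite !hal ler_wpM2r ?ler_nat // ltW.
  have amc : alpha m.+1 < c.
    apply: le_lt_trans nac; by rewrite hal ler_wpM2r ?ler_nat // ltW.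
  have := h am0 amm amc; rewrite !hal !invfM !mulrA ler_pM2r //.
  by rewrite /p !hal.
  by rewrite invr_gt0.
- by apply: fine_ge0; exact: measure_ge0.
- rewrite /p; apply: fine_le; rewrite ?fin_num_measure //; [exact: measurableI|].
  exact: measureIl.
Qed.

End Meas.

Theorem theorem1 (d : measure_display) (T : measurableType d) (R : realType)
  (P : probability T R) (n : nat) (X Phat : 'I_n -> T -> R)
  (I0 S : {set 'I_n}) (atil c : R) :
  (forall j, measurable_fun setT (X j)) ->
  (forall j, j \in S -> measurable_fun setT (Phat j)) ->
  0 < atil < 1 -> atil < c <= 1 -> S \subset I0 ->
  (forall i, i \in I0 :\: S -> PLTDN P X i (X i) c) ->
  (forall i, i \in S ->
     [/\ (exists h : ('I_n -> R) -> R -> R,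
            (forall v a b, a <= b -> h v a <= h v b) /\
            {ae P, forall x, Phat i x = h (minus_vec X i x) (X i x)}),
         (exists F G : R -> T -> R,
            [/\ forall u, 0 < u < c ->
                  cond_prob_version P (sigma_minus X i) [set x | X i x <= u] (F u),
                forall u, 0 < u < c ->
                  cond_prob_version P (sigma_minus X i) [set x | Phat i x <= u] (G u)
              & {ae P, forall x, forall u, 0 < u < c -> F u x <= G u x}])
       & PLTDN P X i (Phat i) c]) ->
  (FDR P I0 (fun k => (k%:R * atil / n%:R)%R) X <=
     \sum_(i in I0 :\: S) P [set x | (X i x <= atil / n%:R)%R] +
     \sum_(i in S) P [set x | (Phat i x <= atil / n%:R)%R])%E.
Proof.
move=> mX mPh /andP[a0 a1] /andP[ac c1] SI0 hI0S hS.
set alpha := fun k : nat => (k%:R * atil / n%:R : R).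
have amono : forall a b : nat, (a <= b)%N -> alpha a <= alpha b.
  move=> a b ab; rewrite /alpha ler_wpM2r ?invr_ge0 ?ler0n //.
  by rewrite ler_wpM2r ?ler_nat // ltW.
pose E i k := [set x | X i x <= alpha k.+1] `&` [set x | Ri d T R n X alpha i x == k.+1].
have mE i k : measurable (E i k).
  apply: measurableI; first exact: meas_le.
  exact: sm_meas _ _ _ _ _ mX _ _ (Ri_sm _ _ _ _ X alpha i (fun m => m == k.+1)).
have FDRE : FDR P I0 alpha X =
    (\sum_(i in I0) \sum_(k < n) fine (P (E i k)) / k.+1%:R)%:E.
  rewrite /FDR.
  have -> : (fun x => (FDP I0 alpha X x)%:E) = (fun x =>
       \sum_(i <- enum I0) \sum_(k < n) ((k.+1%:R)^-1)%:E * (\1_(E i k) x)%:E)%E.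
    apply/funext => x; rewrite (FDP_decomp _ _ _ amono) -sumEFin big_enum /=.
    apply: eq_bigr => i _; rewrite -sumEFin; apply: eq_bigr => k _.
    rewrite -EFinM indicE; case: ifP => h.
    - have hx : x \in E i k by apply: mem_set; case/andP: h => h1 /eqP h2; rewrite /E /=; split => //; exact/eqP.
      by rewrite hx mulr1.
    - rewrite memNset ?mulr0 // => -[h1 /eqP h2]; move: h; rewrite h1 /=.
      by rewrite /Ri in h2; rewrite h2 eqxx.
  have mterm : forall i k, measurable_fun setT
      ((fun x => ((k.+1%:R : R)^-1)%:E * (\1_(E i k) x)%:E)%E : T -> \bar R).
    move=> i k.
    have -> : (fun x => ((k.+1%:R : R)^-1)%:E * (\1_(E i k) x)%:E)%E =
        EFin \o (fun x => (k.+1%:R)^-1 * \1_(E i k) x) by apply/funext => x; rewrite /= EFinM.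
    apply/measurable_realfun.measurable_EFinP; apply: measurable_realfun.measurable_funM.
      exact: measurable_cst.
    exact: measurable_realfun.measurable_indic.
  have term0 : forall i k x, (0 <= ((k.+1%:R : R)^-1)%:E * (\1_(E i k) x)%:E)%E.
    by move=> i k x; rewrite -EFinM lee_fin mulr_ge0 // ?invr_ge0 ?ler0n // indicE ler0n.
  rewrite ge0_integral_sum //; last first.
  - by move=> i x _; apply: sume_ge0 => k _; exact: term0.
  - by move=> i; apply: emeasurable_sum => k _; exact: mterm.
  rewrite -big_enum /= -sumEFin; apply: eq_bigr => i _.
  rewrite ge0_integral_sum //.
  rewrite -sumEFin; apply: eq_bigr => k _.
  rewrite ge0_integralZl_EFin //; try by [rewrite invr_ge0 ler0n |
    move=> x _; rewrite lee_fin indicE ler0n |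
    apply/measurable_EFinP; exact: measurable_indic].
  by rewrite integral_indic // setIT EFinM fineK ?fin_num_measure // muleC.
rewrite FDRE.
have al1 : alpha 1%N = atil / n%:R by rewrite /alpha mul1r.
have -> : (\sum_(i in I0 :\: S) P [set x | (X i x <= atil / n%:R)%R])%E =
    (\sum_(i in I0 :\: S) fine (P [set x | X i x <= atil / n%:R]))%:E.
  by rewrite -sumEFin; apply: eq_bigr => i _; exact: prE _ _ _ _ _ (meas_le _ _ _ _ _ (mX i)).
have -> : (\sum_(i in S) P [set x | (Phat i x <= atil / n%:R)%R])%E =
    (\sum_(i in S) fine (P [set x | Phat i x <= atil / n%:R]))%:E.
  rewrite -sumEFin; apply: eq_bigr => i hi.
  exact: prE _ _ _ _ _ (meas_le _ _ _ _ _ (mPh i hi)).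
rewrite -EFinD lee_fin (big_setID (A:=I0) S) (finset.setIidPr SI0) addrC.
have n0 i : (0 < n)%N := leq_ltn_trans (leq0n _) (ltn_ord i).
set a := atil / n%:R.
have hal : forall k, alpha k = k%:R * a by move=> k; rewrite /alpha /a mulrA.
have nac (i : 'I_n) : n%:R * a < c.
  by rewrite /a mulrCA divff ?mulr1 // pnatr_eq0 -lt0n (n0 i).
have a0' (i : 'I_n) : 0 < a by rewrite /a divr_gt0 // ltr0n (n0 i).
apply: lerD; apply: ler_sum => i hi.
- have [_ [F [G [hF hG hae]]] hpl] := hS i hi.
  have hQ : forall k, (0 < k <= n)%N ->
     fine (P ([set x | X i x <= alpha k] `&` [set x | Ri d T R n X alpha i x == k])) <=
     fine (P ([set x | Phat i x <= alpha k] `&` [set x | Ri d T R n X alpha i x == k])).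
    move=> k /andP[k0 kn].
    have ak : 0 < alpha k < c.
      apply/andP; split; first by rewrite hal mulr_gt0 ?ltr0n // (a0' i).
      apply: le_lt_trans (nac i); rewrite hal ler_wpM2r ?ler_nat //; exact: ltW (a0' i).
    apply: (S_le d T R P n X mX i F G (Phat i) (alpha k)).
    - exact: hF.
    - exact: hG.
    - by apply: filterS hae => x h; exact: h _ ak.
    - exact: (Ri_sm _ _ _ _ X alpha i (fun m => m == k)).
    - exact: mPh.
  have := per_i d T R P n X alpha mX i (Phat i) c a (mPh i hi) hpl (a0' i) hal (nac i) hQ.
  by rewrite al1.
- have := per_i d T R P n X alpha mX i (X i) c a (mX i) (hI0S i hi) (a0' i) hal (nac i)
    (fun k _ => le_refl _).
  by rewrite al1.
Qed.
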